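(* For a right $R$-module $M$, the following are equivalent: (1) $M$ is injective; (2) $M$ is pseudo principally $N$-injective for every right $R$-module $N$.
   Context: All rings are associative with identity and all modules are unitary right $R$-modules. A submodule $A$ of $N$ is $N$-cyclic if $A\cong N/L$ for some submodule $L$ of $N$ (equivalently, $A$ is the image of an endomorphism of $N$). $M$ is pseudo principally $N$-injective if for every $N$-cyclic submodule $A$ of $N$, every $R$-monomorphism $A\to M$ extends to an $R$-homomorphism $N\to M$. *)

(* Defs.v *)
From HB Require Import structures.
From mathcomp Require Import all_boot all_order all_algebra.
Set Implicit Arguments. Unset Strict Implicit. Unset Printing Implicit Defensive.
Import GRing.Theory.
Local Open Scope ring_scope.

(* Right R-modules are modelled as left modules over the converse ring R^c:
   for M : rmodType R, the scalar action  r *: m  (r : R^c) is  m * r. *)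
Notation rmodType R := (lmodType (R^c)%type).

Section Defs.
Variable R : pzRingType.

Definition is_submodule (N : rmodType R) (A : {pred N}) : Prop :=
  0 \in A /\ (forall (r : R^c) (u v : N), u \in A -> v \in A -> r *: u + v \in A).

(* A is N-cyclic: A is the image of an R-endomorphism of N
   (equivalently A is isomorphic to N/L for some submodule L of N). *)
Definition N_cyclic (N : rmodType R) (A : {pred N}) : Prop :=
  exists g : {linear N -> N}, forall x : N, x \in A <-> exists y : N, x = g y.

Definition hom_on (N M : rmodType R) (A : {pred N}) (f : N -> M) : Prop :=
  forall (r : R^c) (u v : N), u \in A -> v \in A -> f (r *: u + v) = r *: f u + f v.

Definition mono_on (N M : rmodType R) (A : {pred N}) (f : N -> M) : Prop :=
  hom_on A f /\ {in A &, injective f}.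

Definition pseudo_principally_injective (N M : rmodType R) : Prop :=
  forall A : {pred N}, is_submodule A -> N_cyclic A ->
  forall f : N -> M, mono_on A f ->
  exists h : {linear N -> M}, forall x, x \in A -> h x = f x.

Definition injective_module (M : rmodType R) : Prop :=
  forall (A B : rmodType R) (i : {linear A -> B}), injective i ->
  forall g : {linear A -> M}, exists h : {linear B -> M}, forall a, h (i a) = g a.

End Defs.

(* Main.v *)
Require Import Defs.
From HB Require Import structures.
From mathcomp Require Import all_boot all_order all_algebra.
From Stdlib Require Import ClassicalEpsilon.
Set Implicit Arguments. Unset Strict Implicit. Unset Printing Implicit Defensive.
Import GRing.Theory.
Local Open Scope ring_scope.

Definition sb (P : Prop) : bool := if excluded_middle_informative P then true else false.
Lemma sbP (P : Prop) : sb P <-> P.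
Proof. rewrite /sb; case: excluded_middle_informative => //. Qed.

Section MkLin.
Variables (R : pzRingType) (U : lmodType R) (V : lmodType R) (f : U -> V)
  (Hf : forall r u v, f (r *: u + v) = r *: f u + f v).
Definition mklin_fun := f.
Lemma mklin_proof : linear mklin_fun.
Proof. by move=> r u v; exact: Hf. Qed.
HB.instance Definition _ := GRing.isLinear.Build R U V *:%R mklin_fun mklin_proof.
Definition mklin : {linear U -> V} := mklin_fun.
Lemma mklinE x : mklin x = f x. Proof. by []. Qed.
End MkLin.

Section Quot.
Variables (R : pzRingType) (Q : rmodType R) (S : Q -> Prop)
  (HS : S 0 /\ (forall (r : R^c) u v, S u -> S v -> S (r *: u + v))).

Lemma S0 : S 0. Proof. exact: HS.1. Qed.
Lemma SD u v : S u -> S v -> S (u + v).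
Proof. by move=> ? ?; rewrite -[u]scale1r; apply: HS.2. Qed.
Lemma SZ (r : R^c) u : S u -> S (r *: u).
Proof. by move=> ?; rewrite -[_ *: _]addr0; apply: HS.2 => //; apply: S0. Qed.
Lemma SN u : S u -> S (- u).
Proof. by move=> ?; rewrite -scaleN1r; apply: SZ. Qed.

Lemma exS (x : Q) : exists y, sb (S (y - x)).
Proof. by exists x; apply/sbP; rewrite subrr; apply: S0. Qed.

Definition canon (x : Q) : Q := xchoose (exS x).

Lemma canon_rel x : S (canon x - x).
Proof. by apply/sbP; exact: (xchooseP (exS x)). Qed.

Lemma canon_eq x y : S (x - y) -> canon x = canon y.
Proof.
move=> Hxy; apply: eq_xchoose => z; apply/idP/idP => /sbP H; apply/sbP.
- have -> : z - y = (z - x) + (x - y) by rewrite addrA subrK.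
  exact: SD.
- have -> : z - x = (z - y) + - (x - y) by rewrite opprB addrA subrK.
  by apply: SD => //; apply: SN.
Qed.

Lemma canonK x : canon (canon x) = canon x.
Proof. exact/canon_eq/canon_rel. Qed.

Lemma canon_eqS x y : canon x = canon y -> S (x - y).
Proof.
move=> E.
have -> : x - y = - (canon x - x) + (canon y - y) by rewrite E opprB addrA subrK.
by apply: SD; [apply: SN|]; apply: canon_rel.
Qed.

Definition Qt : Type := let _ := HS in {x : Q | canon x == x}.
HB.instance Definition _ := Choice.copy Qt {x : Q | canon x == x}.

Definition mk (x : Q) : Qt := exist _ (canon x) (introT eqP (canonK x)).
Definition qv (a : Qt) : Q := proj1_sig a.

Lemma mk_qv a : mk (qv a) = a.
Proof. case: a => x Hx; apply: val_inj => /=; exact/eqP. Qed.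

Lemma mkE x y : mk x = mk y <-> S (x - y).
Proof.
split.
- by move=> /(congr1 qv) /= /canon_eqS.
- by move=> /canon_eq H; apply: val_inj.
Qed.

Lemma Qt_ind (P : Qt -> Prop) : (forall x, P (mk x)) -> forall a, P a.
Proof. by move=> H a; rewrite -(mk_qv a). Qed.

Lemma qv_mk x : S (qv (mk x) - x). Proof. exact: canon_rel. Qed.

Definition qzero : Qt := mk 0.
Definition qadd (a b : Qt) : Qt := mk (qv a + qv b).
Definition qopp (a : Qt) : Qt := mk (- qv a).
Definition qscale (r : R^c) (a : Qt) : Qt := mk (r *: qv a).

Lemma qaddE x y : qadd (mk x) (mk y) = mk (x + y).
Proof.
apply/mkE; have -> : qv (mk x) + qv (mk y) - (x + y) = (qv (mk x) - x) + (qv (mk y) - y).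
  by rewrite opprD addrACA.
by apply: SD; apply: qv_mk.
Qed.
Lemma qoppE x : qopp (mk x) = mk (- x).
Proof. by apply/mkE; rewrite -opprD; apply: SN; apply: qv_mk. Qed.
Lemma qscaleE r x : qscale r (mk x) = mk (r *: x).
Proof. by apply/mkE; rewrite -scalerBr; apply: SZ; apply: qv_mk. Qed.

Lemma qaddA : associative qadd.
Proof. by elim/Qt_ind=> x; elim/Qt_ind=> y; elim/Qt_ind=> z; rewrite !qaddE addrA. Qed.
Lemma qaddC : commutative qadd.
Proof. by elim/Qt_ind=> x; elim/Qt_ind=> y; rewrite !qaddE addrC. Qed.
Lemma qadd0 : left_id qzero qadd.
Proof. by elim/Qt_ind=> x; rewrite /qzero qaddE add0r. Qed.
Lemma qaddN : left_inverse qzero qopp qadd.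
Proof. by elim/Qt_ind=> x; rewrite qoppE qaddE addNr. Qed.

HB.instance Definition _ := GRing.isZmodule.Build Qt qaddA qaddC qadd0 qaddN.
Lemma qaddE' x y : mk x + mk y = mk (x + y). Proof. exact: qaddE. Qed.

Lemma qscaleA a b v : qscale a (qscale b v) = qscale (a * b) v.
Proof. by elim/Qt_ind: v => x; rewrite !qscaleE scalerA. Qed.
Lemma qscale1 : left_id 1 qscale.
Proof. by elim/Qt_ind=> x; rewrite qscaleE scale1r. Qed.
Lemma qscaleDr : right_distributive qscale +%R.
Proof.
move=> r; elim/Qt_ind=> x; elim/Qt_ind=> y.
apply: etrans; first exact: (congr1 (qscale r) (qaddE x y)).
rewrite !qscaleE; symmetry; apply: etrans; first exact: qaddE.
by rewrite scalerDr.
Qed.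
Lemma qscaleDl v : {morph qscale^~ v : a b / a + b}.
Proof.
elim/Qt_ind: v => x a b; rewrite !qscaleE; symmetry; apply: etrans; first exact: qaddE.
by rewrite scalerDl.
Qed.

HB.instance Definition _ := GRing.Zmodule_isLmodule.Build R^c Qt qscaleA qscale1 qscaleDr qscaleDl.

Lemma mk_lin (r : R^c) u v : mk (r *: u + v) = r *: mk u + mk v.
Proof.
symmetry; apply: etrans; first exact: (congr1 (fun z => qadd z (mk v)) (qscaleE r u)).
exact: qaddE.
Qed.

Lemma quotient_exists_sec :
  exists (P : rmodType R) (pi : {linear Q -> P}) (s : P -> Q),
    (forall p, pi (s p) = p) /\ (forall q, pi q = 0 <-> S q).
Proof.
exists [the rmodType R of Qt], (mklin mk_lin), qv; split.
- by move=> p; rewrite mklinE mk_qv.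
- move=> q; rewrite mklinE; have -> : (0 : Qt) = mk 0 by [].
  by rewrite mkE subr0.
Qed.
End Quot.

Lemma quotient_exists (R : pzRingType) (Q : rmodType R) (S : Q -> Prop) :
  S 0 -> (forall (r : R^c) u v, S u -> S v -> S (r *: u + v)) ->
  exists (P : rmodType R) (pi : {linear Q -> P}) (s : P -> Q),
    (forall p, pi (s p) = p) /\ (forall q, pi q = 0 <-> S q).
Proof. by move=> H0 H1; exact: (@quotient_exists_sec R Q S (conj H0 H1)). Qed.

Lemma pairE (A B : Type) (x y : A * B) : x.1 = y.1 -> x.2 = y.2 -> x = y.
Proof. by case: x; case: y => /= ? ? ? ? -> ->. Qed.

Theorem proposition2p12 (R : pzRingType) (M : rmodType R) :
  injective_module M <-> (forall N : rmodType R, pseudo_principally_injective N M).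
Proof.
split.
- move=> Hinj N A HA [g Hg] f [Hhom _].
  have Kc : forall (r : R^c) (u v : N), g u = 0 -> g v = 0 -> g (r *: u + v) = 0.
    by move=> r u v Hu Hv; rewrite linearP Hu Hv scaler0 addr0.
  have [P [pi [s [Hps Hker]]]] := @quotient_exists R N (fun x => g x = 0)
    (linear0 g) Kc.
  have gsE : forall q, g (s (pi q)) = g q.
    move=> q; apply/eqP; rewrite -subr_eq0 -linearB; apply/eqP; apply: (proj1 (Hker _)).
    by rewrite linearB Hps subrr.
  have ilin : forall (r : R^c) (p p' : P),
      g (s (r *: p + p')) = r *: g (s p) + g (s p').
    move=> r p p'; rewrite -{1}(Hps p) -{1}(Hps p') -linearP gsE.
    by rewrite linearP.
  pose io := mklin ilin.
  have ioinj : injective io.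
    move=> p p'; rewrite !mklinE => /eqP; rewrite -subr_eq0 -linearB => /eqP.
    move/(proj2 (Hker _)); rewrite linearB !Hps => /eqP; rewrite subr_eq0 => /eqP.
    done.
  have inA : forall p, g (s p) \in A by move=> p; apply/Hg; exists (s p).
  have flin : forall (r : R^c) (p p' : P),
      f (g (s (r *: p + p'))) = r *: f (g (s p)) + f (g (s p')).
    by move=> r p p'; rewrite ilin Hhom ?inA.
  have [h Hh] := Hinj P N io ioinj (mklin flin).
  exists h => x /Hg [y ->].
  by have := Hh (pi y); rewrite !mklinE gsE.
- move=> H A B i Hi g.
  pose Q := (M * B)%type.
  pose S := fun q : Q => exists a, q = (g a, - i a).
  have S0 : S 0 by exists 0; apply: pairE => /=; rewrite !linear0 ?oppr0.
  have Sc : forall (r : R^c) u v, S u -> S v -> S (r *: u + v).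
    move=> r u v [a ->] [b ->]; exists (r *: a + b).
    by apply: pairE => /=; [rewrite linearP | rewrite [i (r *: a + b)]linearP opprD scalerN].
  have [P [pi [s [Hps Hker]]]] := @quotient_exists R Q S S0 Sc.
  pose j := fun m : M => pi (m, 0).
  have jinj : injective j.
    move=> m m' E; apply/eqP; rewrite -subr_eq0; apply/eqP.
    have : pi ((m, 0) - (m', 0)) = 0 by rewrite linearB /= -/(j m) -/(j m') E subrr.
    move/(proj1 (Hker _)) => [a Ea].
    have Ea2 := congr1 snd Ea; have Ea1 := congr1 fst Ea; simpl in Ea1, Ea2.
    have ia0 : i a = 0 by apply/eqP; rewrite -oppr_eq0 -Ea2 subrr.
    have a0 : a = 0 by apply: Hi; rewrite ia0 linear0.
    by rewrite Ea1 a0 linear0.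
  have jlin : forall (r : R^c) u v, j (r *: u + v) = r *: j u + j v.
    move=> r u v; rewrite /j -linearP; congr (pi _).
    by apply: pairE => //=; rewrite scaler0 addr0.
  pose N := (M * P)%type.
  have philin : forall (r : R^c) (u v : N),
      ((0 : M), j (r *: u + v).1) = r *: ((0 : M), j u.1) + (0, j v.1).
    move=> r u v; apply: pairE => /=; first by rewrite scaler0 addr0.
    by rewrite jlin.
  pose phi := mklin philin.
  pose A' : {pred N} := fun x => sb (exists m, x = (0, j m)).
  have A'P : forall x, x \in A' <-> exists m, x = (0, j m).
    by move=> x; rewrite /A' /in_mem /=; apply: sbP.
  pose f := fun x : N =>
    match excluded_middle_informative (exists m, x.2 = j m) with
    | left Hx => proj1_sig (constructive_indefinite_description _ Hx)
    | right _ => 0 end.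
  have fE : forall m, f (0, j m) = m.
    move=> m; rewrite /f; case: excluded_middle_informative => [Hx|[]]; last by exists m.
    by case: constructive_indefinite_description => m' /= /jinj.
  have HA' : is_submodule A'.
    split; first by apply/A'P; exists 0; rewrite /j linear0.
    move=> r u v /A'P [m1 ->] /A'P [m2 ->]; apply/A'P; exists (r *: m1 + m2).
    by apply: pairE => /=; rewrite ?scaler0 ?addr0 // jlin.
  have cyc : N_cyclic A'.
    exists phi => x; rewrite A'P; split.
    - by move=> [m ->]; exists (m, 0); rewrite mklinE.
    - by move=> [y ->]; exists y.1; rewrite mklinE.
  have mono : mono_on A' f.
    split.
    - move=> r u v /A'P [m1 ->] /A'P [m2 ->].
      have -> : r *: ((0 : M), j m1) + (0, j m2) = (0, j (r *: m1 + m2)).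
        by apply: pairE => /=; rewrite ?scaler0 ?addr0 // jlin.
      by rewrite !fE.
    - move=> u v /A'P [m1 ->] /A'P [m2 ->]; rewrite !fE => ->; done.
  have [h Hh] := H N A' HA' cyc f mono.
  have hlin : forall (r : R^c) (u v : B),
      h ((0 : M), pi (0, r *: u + v)) = r *: h (0, pi (0, u)) + h (0, pi (0, v)).
    move=> r u v; rewrite -linearP; congr (h _); apply: pairE => /=.
      by rewrite scaler0 addr0.
    rewrite -linearP; congr (pi _); apply: pairE => //=.
    by rewrite scaler0 addr0.
  exists (mklin hlin) => a; rewrite mklinE.
  have -> : pi ((0 : M), i a) = j (g a).
    apply/eqP; rewrite -subr_eq0 /j -linearB; apply/eqP; apply: (proj2 (Hker _)).
    exists (- a); apply: pairE => /=; rewrite linearN ?opprK //.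
    by rewrite sub0r.
    by rewrite subr0.
  by rewrite Hh ?fE //; apply/A'P; exists (g a).
Qed.
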